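(* Let $\mathbb{H}\in\{\mathbb{R},\mathbb{C}\}$, let $A\in\mathbb{H}^{M\times N}$ be a deterministic matrix whose $m$th row is $a_m^H$, let $x\in\mathbb{H}^N$, $e^z\in\mathbb{H}^M$, $e^y\in\mathbb{R}^M$ be random vectors, let $f:\mathbb{H}\to\mathbb{R}$ be a measurable function, and let $y=f(Ax+e^z)+e^y\in\mathbb{R}^M$, with $f$ applied entrywise. Let $\mathcal{T}:\mathbb{R}\to\mathbb{R}$ be a measurable preprocessing function, applied entrywise to vectors, and assume $\mathbb{E}[\mathcal{T}(y_m)^2]<\infty$ for all $m$ and $\mathbb{E}[\|x\|_2^4]<\infty$. Define $\overline{\mathcal{T}}(y)=\mathbb{E}[\mathcal{T}(y)]\in\mathbb{R}^M$, $K_x=\mathbb{E}[xx^H]$, $$T=\mathbb{E}\big[(\mathcal{T}(y)-\overline{\mathcal{T}}(y))(\mathcal{T}(y)-\overline{\mathcal{T}}(y))^T\big]\in\mathbb{R}^{M\times M},$$ and assume $T$ is full rank. Let $t\in\mathbb{R}^M$ be the (random) vector satisfying $Tt=\mathcal{T}(y)-\overline{\mathcal{T}}(y)$, and for $m=1,\dots,M$ let $$V_m=\mathbb{E}\big[(\mathcal{T}(y_m)-\overline{\mathcal{T}}(y_m))(xx^H-K_x)\big]\in\mathbb{H}^{N\times N}.$$ Consider the problem $$\underset{\widetilde W_m\in\mathbb{H}^{N\times N},\ m=0,\dots,M}{\mathrm{minimize}}\ \mathbb{E}\Big[\Big\|\widetilde W_0+\sum_{m=1}^M\mathcal{T}(y_m)\widetilde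 W_m-xx^H\Big\|_F^2\Big].$$ Then the matrix $D_y=\widetilde W_0+\sum_{m=1}^M\mathcal{T}(y_m)\widetilde W_m$ produced by a minimizer of this problem (i.e., the affine-in-$\mathcal{T}(y)$ matrix minimizing the spectral MSE $\mathbb{E}[\|D_y-xx^H\|_F^2]$) is $$D_y=K_x+\sum_{m=1}^M t_mV_m.$$
   Context: Expectations are taken jointly over the random quantities $x$, $e^z$, $e^y$ ($A$ is deterministic). For $\mathbb{H}=\mathbb{R}$, the superscript $H$ denotes transpose. $\|\cdot\|_F$ is the Frobenius norm. The matrix $D_y$ is called the linear spectral estimator (LSPE) matrix, and the linear spectral estimate of $x$ is a (scaled) leading eigenvector of $D_y$, i.e., a minimizer of $\|D_y-\tilde x\tilde x^H\|_F$ over $\tilde x\in\mathbb{H}^N$. *)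

(* Defs.v *)
From HB Require Import structures.
From mathcomp Require Import all_boot all_order all_algebra.
From mathcomp Require Import all_classical all_reals all_analysis.
From mathcomp Require Import complex.
Set Implicit Arguments. Unset Strict Implicit. Unset Printing Implicit Defensive.
Import Order.TTheory GRing.Theory Num.Theory.
Local Open Scope ring_scope.
Local Open Scope classical_set_scope.

Inductive fld := FR | FC.

Definition scal (R : realType) (k : fld) : numFieldType :=
  match k with FR => Num.NumField.clone R _ | FC => Num.NumField.clone R[i] _ end.

Definition sre (R : realType) (k : fld) : scal R k -> R :=
  match k as k0 return scal R k0 -> R with
  | FR => fun z => z | FC => fun z => complex.Re z end.
Definition sim (R : realType) (k : fld) : scal R k -> R :=
  match k as k0 return scal R k0 -> R with
  | FR => fun _ => 0 | FC => fun z => complex.Im z end.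
Definition sconj (R : realType) (k : fld) : scal R k -> scal R k :=
  match k as k0 return scal R k0 -> scal R k0 with
  | FR => fun z => z | FC => fun z => conjc z end.
Definition sofR (R : realType) (k : fld) : R -> scal R k :=
  match k as k0 return R -> scal R k0 with
  | FR => fun r => r | FC => fun r => Complex r 0 end.
Definition smk (R : realType) (k : fld) : R -> R -> scal R k :=
  match k as k0 return R -> R -> scal R k0 with
  | FR => fun a _ => a | FC => fun a b => Complex a b end.

Definition sabs2 (R : realType) (k : fld) (z : scal R k) : R :=
  sre z ^+ 2 + sim z ^+ 2.

Definition ctr (R : realType) (k : fld) (p q : nat) (A : 'M[scal R k]_(p, q))
  : 'M[scal R k]_(q, p) := (map_mx (@sconj R k) A)^T.

Definition frob2 (R : realType) (k : fld) (p q : nat) (A : 'M[scal R k]_(p, q)) : R :=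
  \sum_(i < p) \sum_(j < q) sabs2 (A i j).

Definition smeas (R : realType) (k : fld) (d : measure_display) (T : measurableType d)
  (F : T -> scal R k) : Prop :=
  measurable_fun setT (fun w => sre (F w)) /\ measurable_fun setT (fun w => sim (F w)).

Definition smeasf (R : realType) (k : fld) : (scal R k -> R) -> Prop :=
  match k as k0 return (scal R k0 -> R) -> Prop with
  | FR => fun f => measurable_fun [set: R] f
  | FC => fun f => measurable_fun [set: R * R] (fun p : R * R => f (Complex p.1 p.2))
  end.

Definition Ex (R : realType) (d : measure_display) (T : measurableType d)
  (P : probability T R) (g : T -> R) : R :=
  fine (\int[P]_w (g w)%:E).

Definition Emx (R : realType) (k : fld) (d : measure_display) (T : measurableType d)
  (P : probability T R) (p q : nat) (F : T -> 'M[scal R k]_(p, q)) : 'M[scal R k]_(p, q) :=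
  \matrix_(i, j) smk k (Ex P (fun w => sre (F w i j))) (Ex P (fun w => sim (F w i j))).

(* Main.v *)
Require Import Defs.
From HB Require Import structures.
From mathcomp Require Import all_boot all_order all_algebra.
From mathcomp Require Import all_classical all_reals all_analysis.
From mathcomp Require Import complex.
Import Order.TTheory GRing.Theory Num.Theory.
Local Open Scope ring_scope.
Local Open Scope classical_set_scope.

From mathcomp Require Import measurable_realfun.
From mathcomp Require Import ring lra.

Set Implicit Arguments. Unset Strict Implicit. Unset Printing Implicit Defensive.

Section S.
Variables (R : realType) (k : fld).
Implicit Types (a b : scal R k).

Lemma sreD a b : sre (a + b) = sre a + sre b.
Proof. by case: k a b => [a b|[a1 a2] [b1 b2]]. Qed.
Lemma simD a b : sim (a + b) = sim a + sim b.
Proof. case: k a b => [a b|[a1 a2] [b1 b2]] //=; by rewrite addr0. Qed.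
Lemma sreN a : sre (- a) = - sre a.
Proof. by case: k a => [a|[a1 a2]]. Qed.
Lemma simN a : sim (- a) = - sim a.
Proof. case: k a => [a|[a1 a2]] //=; by rewrite oppr0. Qed.
Lemma sre0 : sre (0 : scal R k) = 0.
Proof. by case: k. Qed.
Lemma sim0 : sim (0 : scal R k) = 0.
Proof. by case: k. Qed.
Lemma sreM a b : sre (a * b) = sre a * sre b - sim a * sim b.
Proof. case: k a b => [a b|[a1 a2] [b1 b2]] //=; by rewrite mulr0 subr0. Qed.
Lemma simM a b : sim (a * b) = sre a * sim b + sim a * sre b.
Proof. case: k a b => [a b|[a1 a2] [b1 b2]] //=; by rewrite mulr0 mul0r addr0. Qed.
Lemma sre_conj a : sre (sconj a) = sre a.
Proof. by case: k a => [a|[a1 a2]]. Qed.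
Lemma sim_conj a : sim (sconj a) = - sim a.
Proof. case: k a => [a|[a1 a2]] //=; by rewrite oppr0. Qed.
Lemma sre_sofR (r : R) : sre (sofR k r) = r.
Proof. by case: k. Qed.
Lemma sim_sofR (r : R) : sim (sofR k r) = 0.
Proof. by case: k. Qed.
Lemma sre_smk (r s : R) : sre (smk k r s) = r.
Proof. by case: k. Qed.
Lemma sim01 a : sim a * sim (smk k 0 1 : scal R k) = sim a.
Proof. case: k a => [a|[a1 a2]] /=; by rewrite ?mulr0 ?mulr1. Qed.
Lemma sim_smk10 : sim (smk k 1 0 : scal R k) = 0.
Proof. by case: k. Qed.
Lemma seq_eq a b : sre a = sre b -> sim a = sim b -> a = b.
Proof. case: k a b => [a b|[a1 a2] [b1 b2]] //= -> -> //. Qed.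
End S.

Section S2.
Variables (R : realType) (k : fld).
Implicit Types (a b : scal R k) (r s : R).

Lemma sofR1 : sofR k 1 = 1 :> scal R k.
Proof. by case: k. Qed.
Lemma sreZ r a : sre (sofR k r * a) = r * sre a.
Proof. by rewrite sreM sre_sofR sim_sofR mul0r subr0. Qed.
Lemma simZ r a : sim (sofR k r * a) = r * sim a.
Proof. by rewrite simM sre_sofR sim_sofR mul0r addr0. Qed.
Lemma sreB a b : sre (a - b) = sre a - sre b.
Proof. by rewrite sreD sreN. Qed.
Lemma simB a b : sim (a - b) = sim a - sim b.
Proof. by rewrite simD simN. Qed.
Lemma sre_sum (I : Type) (l : seq I) (F : I -> scal R k) :
  sre (\sum_(i <- l) F i) = \sum_(i <- l) sre (F i).
Proof. elim: l => [|i l IH]; rewrite ?big_nil ?sre0 // !big_cons sreD IH //. Qed.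
Lemma sim_sum (I : Type) (l : seq I) (F : I -> scal R k) :
  sim (\sum_(i <- l) F i) = \sum_(i <- l) sim (F i).
Proof. elim: l => [|i l IH]; rewrite ?big_nil ?sim0 // !big_cons simD IH //. Qed.
Lemma sre_mulconj a b : sre (a * sconj b) = sre a * sre b + sim a * sim b.
Proof. rewrite sreM sre_conj sim_conj; ring. Qed.
Lemma sim_mulconj a b : sim (a * sconj b) = sim a * sre b - sre a * sim b.
Proof. rewrite simM sre_conj sim_conj; ring. Qed.
Lemma sabs2_mulconj a b : sabs2 (a * sconj b) = sabs2 a * sabs2 b.
Proof. rewrite /sabs2 sre_mulconj sim_mulconj; ring. Qed.
Lemma sabs2N a : sabs2 (- a) = sabs2 a.
Proof. rewrite /sabs2 sreN simN; ring. Qed.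
Lemma sabs2_ge0 a : 0 <= sabs2 a.
Proof. by rewrite /sabs2 addr_ge0 // sqr_ge0. Qed.
Lemma sre_le a : sre a ^+ 2 <= sabs2 a.
Proof. by rewrite /sabs2 lerDl sqr_ge0. Qed.
Lemma sim_le a : sim a ^+ 2 <= sabs2 a.
Proof. by rewrite /sabs2 lerDr sqr_ge0. Qed.
Lemma sre_smk10 : sre (smk k 1 0 : scal R k) = 1.
Proof. by case: k. Qed.
Lemma sre_smk01 : sre (smk k 0 1 : scal R k) = 0.
Proof. by case: k. Qed.

Definition ip p q (A B : 'M[scal R k]_(p, q)) : R :=
  \sum_i \sum_j (sre (A i j) * sre (B i j) + sim (A i j) * sim (B i j)).

Lemma frob2_DZ p q (A B : 'M[scal R k]_(p, q)) s :
  frob2 (A + sofR k s *: B) = frob2 A + 2 * s * ip A B + s ^+ 2 * frob2 B.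
Proof.
rewrite /frob2 /ip !big_distrr -!big_split /=; apply: eq_bigr => i _.
rewrite !big_distrr -!big_split /=; apply: eq_bigr => j _.
rewrite !mxE /sabs2 sreD simD sreZ simZ; ring.
Qed.

Lemma ipZ p q (A B : 'M[scal R k]_(p, q)) s : ip A (sofR k s *: B) = s * ip A B.
Proof.
rewrite /ip big_distrr /=; apply: eq_bigr => i _; rewrite big_distrr /=; apply: eq_bigr => j _.
rewrite !mxE sreZ simZ; ring.
Qed.

Lemma frob2Z p q (B : 'M[scal R k]_(p, q)) s : frob2 (sofR k s *: B) = s ^+ 2 * frob2 B.
Proof.
rewrite /frob2 big_distrr /=; apply: eq_bigr => i _; rewrite big_distrr /=; apply: eq_bigr => j _.
rewrite !mxE /sabs2 sreZ simZ; ring.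
Qed.

Lemma sum_delta p q (i : 'I_p) (j : 'I_q) (F : 'I_p -> 'I_q -> R) :
  (forall (a : 'I_p) (b : 'I_q), (a != i) || (b != j) -> F a b = 0) ->
  \sum_a \sum_b F a b = F i j.
Proof.
move=> HF; rewrite (bigD1 i) //= [X in _ + X]big1 => [|a ai]; last first.
  by apply: big1 => b _; apply: HF; rewrite ai.
rewrite addr0 (bigD1 j) //= [X in _ + X]big1 => [|b bj]; first by rewrite addr0.
by apply: HF; rewrite bj orbT.
Qed.

Definition Bd p q (i : 'I_p) (j : 'I_q) (u : scal R k) : 'M[scal R k]_(p, q) :=
  \matrix_(a, b) (if (a == i) && (b == j) then u else 0).

Lemma ip_Bd p q (A : 'M[scal R k]_(p, q)) i j u :
  ip A (Bd i j u) = sre (A i j) * sre u + sim (A i j) * sim u.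
Proof.
rewrite /ip (sum_delta (i := i) (j := j)); first by rewrite !mxE !eqxx.
move=> a b hab; rewrite !mxE; case: ifP => [/andP[/eqP ai /eqP bj]|_].
  by move: hab; rewrite ai bj !eqxx.
by rewrite sre0 sim0 !mulr0 addr0.
Qed.

Lemma frob2_Bd p q i j u : frob2 (@Bd p q i j u) = sabs2 u.
Proof.
rewrite /frob2 (sum_delta (i := i) (j := j)); first by rewrite !mxE !eqxx.
move=> a b hab; rewrite !mxE; case: ifP => [/andP[/eqP ai /eqP bj]|_].
  by move: hab; rewrite ai bj !eqxx.
by rewrite /sabs2 sre0 sim0; ring.
Qed.

Lemma frob2_xx n (v : 'cV[scal R k]_n) :
  frob2 (v *m ctr v) = (\sum_i sabs2 (v i 0)) ^+ 2.
Proof.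
rewrite expr2 big_distrl /frob2; apply: eq_bigr => i _.
rewrite big_distrr; apply: eq_bigr => j _.
by rewrite !mxE big_ord1 !mxE sabs2_mulconj.
Qed.

Lemma frob2N p q (A : 'M[scal R k]_(p, q)) : frob2 (- A) = frob2 A.
Proof. rewrite /frob2; apply: eq_bigr => i _; apply: eq_bigr => j _; by rewrite mxE sabs2N. Qed.

Lemma entry_le p q (A : 'M[scal R k]_(p, q)) i j : sabs2 (A i j) <= frob2 A.
Proof.
rewrite /frob2 (bigD1 i) //= (bigD1 j) //= -addrA lerDl.
apply: addr_ge0; first by apply: sumr_ge0 => *; exact: sabs2_ge0.
by apply: sumr_ge0 => *; apply: sumr_ge0 => *; exact: sabs2_ge0.
Qed.

Lemma frob2_ge0 p q (A : 'M[scal R k]_(p, q)) : 0 <= frob2 A.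
Proof. by apply: sumr_ge0 => *; apply: sumr_ge0 => *; exact: sabs2_ge0. Qed.
End S2.

Section L2.
Context (R : realType) d (T : measurableType d) (P : probability T R).
Implicit Types (f g G : T -> R) (c : R).

Definition Int (f : T -> R) := P.-integrable setT (EFin \o f).
Definition L2 (f : T -> R) :=
  measurable_fun setT f /\ (\int[P]_w ((f w ^+ 2)%:E) < +oo)%E.
Definition E (f : T -> R) := fine (\int[P]_w (f w)%:E).

Lemma Int_meas f : Int f -> measurable_fun setT f.
Proof. by move=> /integrableP[/measurable_EFinP]. Qed.

Lemma Int_le f g : measurable_fun setT f -> (forall w, `|f w| <= g w) -> Int g -> Int f.
Proof.
move=> mf fg ig; apply: le_integrable ig => //; first exact/measurable_EFinP.
move=> w _ /=; rewrite lee_fin (le_trans (fg w)) //; exact: ler_norm.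
Qed.

Lemma Int_ext f g : f =1 g -> Int f -> Int g.
Proof. by move=> /funext ->. Qed.

Lemma L2_ext f g : f =1 g -> L2 f -> L2 g.
Proof. by move=> /funext ->. Qed.

Lemma IntD f g : Int f -> Int g -> Int (fun w => f w + g w).
Proof. move=> hf hg; have := integrableD measurableT hf hg; exact: eq_integrable. Qed.

Lemma IntZ c f : Int f -> Int (fun w => c * f w).
Proof. move=> hf; have := integrableZl measurableT c hf; exact: eq_integrable. Qed.

Lemma IntN f : Int f -> Int (fun w => - f w).
Proof. move=> hf; have := integrableN hf; exact: eq_integrable. Qed.

Lemma IntB f g : Int f -> Int g -> Int (fun w => f w - g w).
Proof. by move=> hf hg; apply: IntD => //; exact: IntN. Qed.

Lemma Int_cst c : Int (fun _ => c).
Proof. exact: finite_measure_integrable_cst. Qed.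

Lemma Int_sum (I : Type) (s : seq I) (h : I -> T -> R) :
  (forall i, Int (h i)) -> Int (fun w => \sum_(i <- s) h i w).
Proof.
move=> hh; elim: s => [|i s IH].
  by apply: (Int_ext _ (Int_cst 0)) => w; rewrite big_nil.
by apply: (Int_ext _ (IntD (hh i) IH)) => w; rewrite big_cons.
Qed.

Lemma L2_Int2 f : L2 f -> Int (fun w => f w ^+ 2).
Proof.
move=> [mf fi]; apply/integrableP; split.
  by apply/measurable_EFinP; exact: measurable_funX.
by under eq_integral do rewrite /= ger0_norm ?sqr_ge0//.
Qed.

Lemma L2_le f G : measurable_fun setT f -> (forall w, f w ^+ 2 <= G w) -> Int G -> L2 f.
Proof.
move=> mf fG iG; split => //.
have : Int (fun w => f w ^+ 2).
  apply: Int_le iG; first exact: measurable_funX.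
  by move=> w; rewrite ger0_norm ?sqr_ge0.
by move=> h; exact: (integrable_lty measurableT h).
Qed.

Lemma L2_cst c : L2 (fun _ => c).
Proof.
apply: (L2_le (measurable_cst _) (G := fun _ => c ^+ 2)) => //.
exact: Int_cst.
Qed.

Lemma L2_meas f : L2 f -> measurable_fun setT f.
Proof. by case. Qed.

Lemma L2D f g : L2 f -> L2 g -> L2 (fun w => f w + g w).
Proof.
move=> hf hg; apply: (L2_le (G := fun w => 2 * f w ^+ 2 + 2 * g w ^+ 2)).
- exact: measurable_funD (L2_meas hf) (L2_meas hg).
- move=> w; have := sqr_ge0 (f w - g w); nra.
- by apply: IntD; apply: IntZ; exact: L2_Int2.
Qed.

Lemma L2Z c f : L2 f -> L2 (fun w => c * f w).
Proof.
move=> hf; apply: (L2_le (G := fun w => c ^+ 2 * f w ^+ 2)).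
- exact: measurable_funM (measurable_cst _) (L2_meas hf).
- by move=> w; rewrite exprMn.
- by apply: IntZ; exact: L2_Int2.
Qed.

Lemma L2N f : L2 f -> L2 (fun w => - f w).
Proof. by move=> hf; apply: (L2_ext _ (L2Z (-1) hf)) => w; rewrite mulN1r. Qed.

Lemma L2B f g : L2 f -> L2 g -> L2 (fun w => f w - g w).
Proof. by move=> hf hg; apply: L2D => //; exact: L2N. Qed.

Lemma L2_sum (I : Type) (s : seq I) (h : I -> T -> R) :
  (forall i, L2 (h i)) -> L2 (fun w => \sum_(i <- s) h i w).
Proof.
move=> hh; elim: s => [|i s IH].
  by apply: (L2_ext _ (L2_cst 0)) => w; rewrite big_nil.
by apply: (L2_ext _ (L2D (hh i) IH)) => w; rewrite big_cons.
Qed.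

Lemma L2M f g : L2 f -> L2 g -> Int (fun w => f w * g w).
Proof.
move=> hf hg; apply: (Int_le (g := fun w => f w ^+ 2 + g w ^+ 2)).
- exact: measurable_funM (L2_meas hf) (L2_meas hg).
- move=> w; rewrite ler_norml; apply/andP; split; nra.
- by apply: IntD; exact: L2_Int2.
Qed.

Lemma L2_Int f : L2 f -> Int f.
Proof. by move=> hf; apply: (Int_ext _ (L2M hf (L2_cst 1))) => w; rewrite mulr1. Qed.

Lemma E_ext f g : f =1 g -> E f = E g.
Proof. by move=> /funext ->. Qed.

Lemma ED f g : Int f -> Int g -> E (fun w => f w + g w) = E f + E g.
Proof. exact: RintegralD. Qed.

Lemma EZ c f : Int f -> E (fun w => c * f w) = c * E f.
Proof. exact: RintegralZl. Qed.

Lemma E_cst c : E (fun _ => c) = c.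
Proof. by rewrite /E integral_cst //= probability_setT mule1. Qed.

Lemma EN f : Int f -> E (fun w => - f w) = - E f.
Proof.
move=> hf; rewrite -mulN1r -EZ //; congr E; apply: funext => w; by rewrite mulN1r.
Qed.

Lemma EB f g : Int f -> Int g -> E (fun w => f w - g w) = E f - E g.
Proof. by move=> hf hg; rewrite ED ?EN //; exact: IntN. Qed.

Lemma E_sum (I : Type) (s : seq I) (h : I -> T -> R) :
  (forall i, Int (h i)) -> E (fun w => \sum_(i <- s) h i w) = \sum_(i <- s) E (h i).
Proof.
move=> hh; elim: s => [|i s IH].
  rewrite big_nil (@E_ext _ (fun _ => 0)); first exact: E_cst.
  by move=> w; rewrite big_nil.
rewrite big_cons -IH -ED //; last exact: Int_sum.
by congr E; apply: funext => w; rewrite big_cons.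
Qed.


Lemma int_E f : Int f -> (\int[P]_w (f w)%:E)%E = (E f)%:E.
Proof. by move=> hf; rewrite /E fineK //; exact: integrable_fin_num. Qed.

End L2.

Lemma quad0 (R : realType) (a b : R) : (forall s, 0 <= 2 * s * a + s ^+ 2 * b) -> a = 0.
Proof.
move=> H; have [b0|b0] := leP b 0.
  have := H (- a); nra.
set q := a / b; have ha : a = q * b by rewrite /q divfK // gt_eqF.
have := H (- q); rewrite ha => h.
have : q ^+ 2 * b <= 0 by nra.
move=> h2; have : q ^+ 2 <= 0 by rewrite -(ler_pM2r b0) mul0r.
move=> h3; have q0 : q = 0 by apply/eqP; rewrite -sqrf_eq0 eq_le h3 sqr_ge0.
by rewrite q0 mul0r.
Qed.

Section Core.
Context (R : realType) d (T : measurableType d) (P : probability T R).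

Lemma core (M : nat) (g : 'I_M -> T -> R) (Z : T -> R) (c0 : R) (c : 'I_M -> R)
  (Tb : 'I_M -> R) (t : T -> 'I_M -> R) :
  (forall m, L2 P (g m)) -> L2 P Z ->
  (forall m, Tb m = E P (g m)) ->
  (forall w m, \sum_m' E P (fun v => (g m v - Tb m) * (g m' v - Tb m')) * t w m'
     = g m w - Tb m) ->
  E P (fun w => c0 + \sum_m c m * g m w - Z w) = 0 ->
  (forall m', E P (fun w => (c0 + \sum_m c m * g m w - Z w) * g m' w) = 0) ->
  forall w, c0 + \sum_m c m * g m w
    = E P Z + \sum_m' t w m' * E P (fun v => (g m' v - Tb m') * (Z v - E P Z)).
Proof.
move=> Lg LZ hTb ht H1 H2 w.
set r := fun w => c0 + \sum_m c m * g m w - Z w.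
have Lgc : forall m, L2 P (fun v => g m v - Tb m) by move=> m; apply: L2B => //; exact: L2_cst.
have LZc : L2 P (fun v => Z v - E P Z) by apply: L2B => //; exact: L2_cst.
have Lsum : L2 P (fun w => \sum_m c m * g m w).
  by apply: L2_sum => m; exact: L2Z.
have Lr : L2 P r by apply: L2B => //; apply: L2D => //; exact: L2_cst.
have A : c0 + \sum_m c m * Tb m - E P Z = 0.
  apply: (etrans _ H1); symmetry; rewrite EB //; [|apply: L2_Int; apply: L2D => //; exact: L2_cst|exact: L2_Int].
  rewrite ED //; [|exact: L2_Int (L2_cst _ _)|exact: L2_Int].
  rewrite E_cst E_sum; last by move=> m; apply: L2_Int; exact: L2Z.
  congr (_ + _ - _); apply: eq_bigr => m _; rewrite EZ ?hTb //; exact: L2_Int.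
have rE : forall v, r v = \sum_m c m * (g m v - Tb m) - (Z v - E P Z).
  move=> v; rewrite /r.
  under [X in _ = X - _]eq_bigr do rewrite mulrBr.
  rewrite sumrB; move: A; lra.
have B : forall m', \sum_m c m * E P (fun v => (g m v - Tb m) * (g m' v - Tb m'))
                   = E P (fun v => (g m' v - Tb m') * (Z v - E P Z)).
  move=> m'.
  have e1 : E P (fun v => r v * (g m' v - Tb m')) = 0.
    rewrite (@E_ext _ _ _ P _ (fun v => r v * g m' v - Tb m' * r v)); last first.
      by move=> v; ring.
    rewrite EB; [|exact: L2M|apply: L2_Int; exact: L2Z].
    by rewrite EZ; [rewrite H1 H2 mulr0 subr0|exact: L2_Int].
  move: e1; rewrite (@E_ext _ _ _ P _ (fun v => \sum_m c m * ((g m v - Tb m) * (g m' v - Tb m'))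
                 - (g m' v - Tb m') * (Z v - E P Z))); last first.
    move=> v; rewrite rE mulrBl big_distrl /=; congr (_ - _); last by rewrite mulrC.
    by apply: eq_bigr => m _; rewrite mulrA.
  rewrite EB; [|apply: Int_sum => m; apply: IntZ; exact: L2M|exact: L2M].
  rewrite E_sum; last by move=> m; apply: IntZ; exact: L2M.
  move/eqP; rewrite subr_eq0 => /eqP <-.
  by apply: eq_bigr => m _; rewrite EZ //; exact: L2M.
have -> : c0 = E P Z - \sum_m c m * Tb m by move: A; lra.
rewrite -addrA; congr (_ + _).
rewrite addrC -sumrB.
under eq_bigr do rewrite -mulrBr -ht big_distrr /=.
rewrite exchange_big /=; apply: eq_bigr => m' _.
rewrite -B big_distrr /=; apply: eq_bigr => m _; ring.
Qed.
End Core.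

Section Aux.
Context (R : realType) d (T : measurableType d) (P : probability T R).

Lemma sre_Emx k p q (F : T -> 'M[scal R k]_(p, q)) i j :
  sre (Emx P F i j) = E P (fun w => sre (F w i j)).
Proof. by rewrite mxE sre_smk. Qed.

Lemma sim_Emx k p q (F : T -> 'M[scal R k]_(p, q)) i j :
  sim (Emx P F i j) = E P (fun w => sim (F w i j)).
Proof.
rewrite mxE; case: k F => F //=.
by rewrite E_cst.
Qed.

Lemma smeas_comp k (f : scal R k -> R) (z : T -> scal R k) :
  smeasf f -> measurable_fun setT (fun w => sre (z w)) ->
  measurable_fun setT (fun w => sim (z w)) -> measurable_fun setT (fun w => f (z w)).
Proof.
case: k f z => f z /= hf h1 h2; first exact: measurableT_comp hf h1.
have -> : (fun w => f (z w)) =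
   (fun p : R * R => f (Complex p.1 p.2)) \o (fun w => (complex.Re (z w), complex.Im (z w))).
  by apply: funext => w /=; case: (z w).
apply: measurableT_comp hf _; exact: measurable_fun_pair.
Qed.

Lemma zmod_rearr (V : zmodType) (a b c e f : V) :
  a + b + (c + e) - f = a + c - f + (b + e).
Proof.
by rewrite addrACA [RHS]addrAC.
Qed.
End Aux.

Unset Implicit Arguments.

Theorem theorem1
  (R : realType) (k : fld) (d : measure_display) (Omega : measurableType d)
  (P : probability Omega R) (M N : nat)
  (A : 'M[scal R k]_(M, N))
  (x : Omega -> 'cV[scal R k]_N) (ez : Omega -> 'cV[scal R k]_M)
  (ey : Omega -> 'cV[R]_M)
  (f : scal R k -> R) (Tf : R -> R)
  (y : Omega -> 'cV[R]_M)
  (Tbar : 'cV[R]_M) (Kx : 'M[scal R k]_N) (Tcov : 'M[R]_M)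
  (t : Omega -> 'cV[R]_M) (V : 'I_M -> 'M[scal R k]_N)
  (W0 : 'M[scal R k]_N) (W : 'I_M -> 'M[scal R k]_N) :
  (forall i, smeas (fun w => x w i 0)) ->
  (forall m, smeas (fun w => ez w m 0)) ->
  (forall m, measurable_fun setT (fun w => ey w m 0)) ->
  smeasf f -> measurable_fun [set: R] Tf ->
  (forall w, y w = \col_m (f ((A *m x w + ez w) m 0) + ey w m 0)) ->
  (forall m, (\int[P]_w ((Tf (y w m 0)) ^+ 2)%:E < +oo)%E) ->
  (\int[P]_w ((\sum_i sabs2 (x w i 0)) ^+ 2)%:E < +oo)%E ->
  Tbar = \col_m Ex P (fun w => Tf (y w m 0)) ->
  Kx = Emx P (fun w => x w *m ctr (x w)) ->
  Tcov = \matrix_(m, m') Ex P (fun w => (Tf (y w m 0) - Tbar m 0)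
                                       * (Tf (y w m' 0) - Tbar m' 0)) ->
  \rank Tcov = M ->
  (forall w, Tcov *m t w = \col_m (Tf (y w m 0) - Tbar m 0)) ->
  (forall m, V m = Emx P (fun w =>
      sofR k (Tf (y w m 0) - Tbar m 0) *: (x w *m ctr (x w) - Kx))) ->
  (forall (W0' : 'M[scal R k]_N) (W' : 'I_M -> 'M[scal R k]_N),
     (\int[P]_w (frob2 (W0 + \sum_m sofR k (Tf (y w m 0)) *: W m
                       - x w *m ctr (x w)))%:E
      <= \int[P]_w (frob2 (W0' + \sum_m sofR k (Tf (y w m 0)) *: W' m
                       - x w *m ctr (x w)))%:E)%E) ->
  forall w, W0 + \sum_m sofR k (Tf (y w m 0)) *: W m
            = Kx + \sum_m sofR k (t w m 0) *: V m.
Proof.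
move=> hx hez hey hf hTf hy hT2 hx4 hTbar hKx hTcov _ htt hV hmin.
set g := fun (m : 'I_M) w => Tf (y w m 0).
set X := fun w => x w *m ctr (x w).
have mxr : forall i, measurable_fun setT (fun w => sre (x w i 0)) by move=> i; case: (hx i).
have mxi : forall i, measurable_fun setT (fun w => sim (x w i 0)) by move=> i; case: (hx i).
have Lg : forall m, L2 P (g m).
  move=> m; split; last exact: hT2.
  rewrite /g; apply: measurableT_comp hTf _.
  have -> : (fun w => y w m 0) = (fun w => f ((A *m x w + ez w) m 0) + ey w m 0).
    by apply: funext => w; rewrite hy mxE.
  apply: measurable_funD => //; apply: smeas_comp => //.
  - have -> : (fun w => sre ((A *m x w + ez w) m 0)) =
       (fun w => \sum_n (sre (A m n) * sre (x w n 0) - sim (A m n) * sim (x w n 0))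
                 + sre (ez w m 0)).
      apply: funext => w; rewrite !mxE sreD sre_sum; congr (_ + _).
      by apply: eq_bigr => n _; rewrite sreM.
    apply: measurable_funD; last by case: (hez m).
    apply: measurable_sum => n; apply: measurable_funB; apply: measurable_funM => //;
      exact: measurable_cst.
  - have -> : (fun w => sim ((A *m x w + ez w) m 0)) =
       (fun w => \sum_n (sre (A m n) * sim (x w n 0) + sim (A m n) * sre (x w n 0))
                 + sim (ez w m 0)).
      apply: funext => w; rewrite !mxE simD sim_sum; congr (_ + _).
      by apply: eq_bigr => n _; rewrite simM.
    apply: measurable_funD; last by case: (hez m).
    apply: measurable_sum => n; apply: measurable_funD; apply: measurable_funM => //;
      exact: measurable_cst.
set G := fun w => (\sum_i sabs2 (x w i 0)) ^+ 2.
have mG : measurable_fun setT G.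
  rewrite /G; apply: measurable_funX; apply: measurable_sum => i.
  rewrite /sabs2; apply: measurable_funD; exact: measurable_funX.
have IG : Int P G.
  apply/integrableP; split; first exact/measurable_EFinP.
  under eq_integral do rewrite /= ger0_norm ?sqr_ge0//.
  exact: hx4.
have XG : forall w i j, sabs2 (X w i j) <= G w.
  by move=> w i j; rewrite /G -frob2_xx; exact: entry_le.
have Xre : forall w i j, sre (X w i j) = sre (x w i 0) * sre (x w j 0) + sim (x w i 0) * sim (x w j 0).
  by move=> w i j; rewrite /X !mxE big_ord1 !mxE sre_mulconj.
have Xim : forall w i j, sim (X w i j) = sim (x w i 0) * sre (x w j 0) - sre (x w i 0) * sim (x w j 0).
  by move=> w i j; rewrite /X !mxE big_ord1 !mxE sim_mulconj.
have LZR : forall i j, L2 P (fun w => sre (X w i j)).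
  move=> i j; apply: (L2_le (G := G)) => //; last by move=> w; exact: le_trans (sre_le _) (XG w i j).
  under eq_fun do rewrite Xre.
  by apply: measurable_funD; apply: measurable_funM.
have LZI : forall i j, L2 P (fun w => sim (X w i j)).
  move=> i j; apply: (L2_le (G := G)) => //; last by move=> w; exact: le_trans (sim_le _) (XG w i j).
  under eq_fun do rewrite Xim.
  by apply: measurable_funB; apply: measurable_funM.
set Res := fun w => W0 + \sum_m sofR k (g m w) *: W m - X w.
have Rre : forall w i j, sre (Res w i j) = sre (W0 i j) + \sum_m sre (W m i j) * g m w - sre (X w i j).
  move=> w i j; rewrite /Res !mxE sreB sreD summxE sre_sum; congr (_ + _ - _).
  by apply: eq_bigr => l _; rewrite mxE sreZ mulrC.
have Rim : forall w i j, sim (Res w i j) = sim (W0 i j) + \sum_m sim (W m i j) * g m w - sim (X w i j).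
  move=> w i j; rewrite /Res !mxE simB simD summxE sim_sum; congr (_ + _ - _).
  by apply: eq_bigr => l _; rewrite mxE simZ mulrC.
have LRre : forall i j, L2 P (fun w => sre (Res w i j)).
  move=> i j; apply: (L2_ext (fun w => esym (Rre w i j))).
  apply: L2B; last exact: LZR.
  apply: L2D; first exact: L2_cst.
  apply: L2_sum => l; exact: (L2Z _ (Lg l)).
have LRim : forall i j, L2 P (fun w => sim (Res w i j)).
  move=> i j; apply: (L2_ext (fun w => esym (Rim w i j))).
  apply: L2B; last exact: LZI.
  apply: L2D; first exact: L2_cst.
  apply: L2_sum => l; exact: (L2Z _ (Lg l)).
have IF : Int P (fun w => frob2 (Res w)).
  have mF : measurable_fun setT (fun w => frob2 (Res w)).
    rewrite /frob2; apply: measurable_sum => i; apply: measurable_sum => j.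
    rewrite /sabs2; apply: measurable_funD; apply: measurable_funX.
      exact: L2_meas (LRre i j).
    exact: L2_meas (LRim i j).
  apply/integrableP; split; first exact/measurable_EFinP.
  under eq_integral do rewrite /= ger0_norm ?frob2_ge0//.
  apply: le_lt_trans (hmin 0 (fun _ => 0)) _.
  apply: le_lt_trans hx4; rewrite le_eqVlt; apply/orP; left; apply/eqP.
  apply: eq_integral => w _; congr (_%:E).
  rewrite add0r big1 ?sub0r ?frob2N ?frob2_xx // => m _; exact: scaler0.
have FOC : forall (e : Omega -> R) (B0 : 'M[scal R k]_N) (Bs : 'I_M -> 'M[scal R k]_N)
    (u : scal R k) (i j : 'I_N),
    L2 P e -> (forall w, B0 + \sum_m sofR k (g m w) *: Bs m = sofR k (e w) *: Bd i j u) ->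
    E P (fun w => e w * ip (Res w) (Bd i j u)) = 0.
  move=> e B0 Bs u i j Le hB.
  set h := fun w => ip (Res w) (Bd i j u).
  have Lh : L2 P h.
    apply: (L2_ext (f := fun w => sre u * sre (Res w i j) + sim u * sim (Res w i j))).
      by move=> w; rewrite /h ip_Bd mulrC [sim u * _]mulrC.
    by apply: L2D; apply: L2Z.
  have I2 : Int P (fun w => e w * h w) by exact: L2M.
  have I3 : Int P (fun w => e w ^+ 2) by exact: L2_Int2.
  apply: (@quad0 _ _ (sabs2 u * E P (fun w => e w ^+ 2))) => s.
  have H := hmin (W0 + sofR k s *: B0) (fun m => W m + sofR k s *: Bs m).
  have eqi : forall w, frob2 (W0 + sofR k s *: B0 + \sum_m sofR k (Tf (y w m 0)) *: (W m + sofR k s *: Bs m)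
        - x w *m ctr (x w)) = frob2 (Res w) + 2 * s * (e w * h w) + s ^+ 2 * (sabs2 u * e w ^+ 2).
    move=> w.
    have -> : W0 + sofR k s *: B0 + \sum_m sofR k (Tf (y w m 0)) *: (W m + sofR k s *: Bs m)
        - x w *m ctr (x w) = Res w + sofR k s *: (sofR k (e w) *: Bd i j u).
      rewrite -hB scalerDr scaler_sumr.
      under eq_bigr do rewrite scalerDr scalerA mulrC -scalerA.
      by rewrite big_split /= zmod_rearr.
    rewrite frob2_DZ ipZ frob2Z frob2_Bd /h; ring.
  move: H.
  rewrite [X in (_ <= X)%E](eq_integral (fun w => (frob2 (Res w) + 2 * s * (e w * h w) + s ^+ 2 * (sabs2 u * e w ^+ 2))%:E)); last first.
    by move=> w _; rewrite eqi.
  have I23 : Int P (fun w => frob2 (Res w) + 2 * s * (e w * h w)).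
    exact: (IntD IF (IntZ (2 * s) I2)).
  rewrite [X in (X <= _)%E]int_E; last exact: IF.
  rewrite int_E; last exact: (IntD I23 (IntZ _ (IntZ _ I3))).
  rewrite lee_fin.
  rewrite (ED (f := fun w => frob2 (Res w) + 2 * s * (e w * h w))) //; last exact: (IntZ _ (IntZ _ I3)).
  rewrite ED //; last exact: (IntZ _ I2).
  rewrite EZ // EZ; last exact: IntZ.
  rewrite EZ //.
  move=> H; rewrite -(subrr (E P (fun w => frob2 (Res w)))); move: H; lra.
have re_core : forall i j w, sre (W0 i j) + \sum_m sre (W m i j) * g m w
    = E P (fun v => sre (X v i j)) + \sum_m' t w m' 0 *
        E P (fun v => (g m' v - Tbar m' 0) * (sre (X v i j) - E P (fun v => sre (X v i j)))).
  move=> i j.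
  have hip : forall w, ip (Res w) (Bd i j (smk k 1 0)) = sre (Res w i j).
    by move=> w; rewrite ip_Bd sre_smk10 sim_smk10 mulr1 mulr0 addr0.
  apply: (core (c0 := sre (W0 i j)) (c := fun m => sre (W m i j)) (Tb := fun m => Tbar m 0)
            (t := fun w m => t w m 0) Lg (LZR i j)).
  - by move=> m; rewrite hTbar mxE.
  - move=> w m; have := congr1 (fun B : 'M[R]_(M, 1) => B m 0) (htt w); rewrite !mxE => <-.
    by apply: eq_bigr => m' _; rewrite hTcov mxE.
  - have hB : forall w, Bd i j (smk k 1 0) + \sum_m sofR k (g m w) *: (0 : 'M[scal R k]_N)
        = sofR k 1 *: Bd i j (smk k 1 0).
      by move=> w; rewrite big1 ?addr0 ?sofR1 ?scale1r // => m _; exact: scaler0.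
    apply: (etrans _ (FOC (fun _ => 1) _ (fun _ => 0) _ i j (L2_cst _ _) hB)).
    apply: E_ext => w; by rewrite mul1r hip Rre.
  - move=> m'.
    have hB : forall w, 0 + \sum_m sofR k (g m w) *: (if m == m' then Bd i j (smk k 1 0) else 0)
        = sofR k (g m' w) *: Bd i j (smk k 1 0).
      move=> w; rewrite add0r (bigD1 m') //= eqxx big1 ?addr0 // => m /negbTE ->.
      exact: scaler0.
    apply: (etrans _ (FOC (g m') _ _ _ i j (Lg m') hB)).
    apply: E_ext => w; by rewrite hip Rre mulrC.
have im_core : forall i j w, sim (W0 i j) + \sum_m sim (W m i j) * g m w
    = E P (fun v => sim (X v i j)) + \sum_m' t w m' 0 *
        E P (fun v => (g m' v - Tbar m' 0) * (sim (X v i j) - E P (fun v => sim (X v i j)))).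
  move=> i j.
  have hip : forall w, ip (Res w) (Bd i j (smk k 0 1)) = sim (Res w i j).
    by move=> w; rewrite ip_Bd sre_smk01 sim01 mulr0 add0r.
  apply: (core (c0 := sim (W0 i j)) (c := fun m => sim (W m i j)) (Tb := fun m => Tbar m 0)
            (t := fun w m => t w m 0) Lg (LZI i j)).
  - by move=> m; rewrite hTbar mxE.
  - move=> w m; have := congr1 (fun B : 'M[R]_(M, 1) => B m 0) (htt w); rewrite !mxE => <-.
    by apply: eq_bigr => m' _; rewrite hTcov mxE.
  - have hB : forall w, Bd i j (smk k 0 1) + \sum_m sofR k (g m w) *: (0 : 'M[scal R k]_N)
        = sofR k 1 *: Bd i j (smk k 0 1).
      by move=> w; rewrite big1 ?addr0 ?sofR1 ?scale1r // => m _; exact: scaler0.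
    apply: (etrans _ (FOC (fun _ => 1) _ (fun _ => 0) _ i j (L2_cst _ _) hB)).
    apply: E_ext => w; by rewrite mul1r hip Rim.
  - move=> m'.
    have hB : forall w, 0 + \sum_m sofR k (g m w) *: (if m == m' then Bd i j (smk k 0 1) else 0)
        = sofR k (g m' w) *: Bd i j (smk k 0 1).
      move=> w; rewrite add0r (bigD1 m') //= eqxx big1 ?addr0 // => m /negbTE ->.
      exact: scaler0.
    apply: (etrans _ (FOC (g m') _ _ _ i j (Lg m') hB)).
    apply: E_ext => w; by rewrite hip Rim mulrC.
move=> w; apply/matrixP => i j; apply: seq_eq.
- rewrite !mxE !sreD !summxE !sre_sum.
  have -> : \sum_m sre ((sofR k (Tf (y w m 0)) *: W m) i j) = \sum_m sre (W m i j) * g m w.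
    by apply: eq_bigr => m _; rewrite mxE sreZ mulrC.
  rewrite re_core hKx sre_Emx; congr (_ + _); apply: eq_bigr => m _.
  rewrite mxE sreZ hV sre_Emx; congr (_ * _); apply: E_ext => v.
  symmetry; rewrite mxE sreZ; congr (_ * _).
  have -> : (x v *m ctr (x v) - Kx) i j = X v i j - Kx i j by rewrite !mxE.
  by rewrite sreB hKx sre_Emx.
- rewrite !mxE !simD !summxE !sim_sum.
  have -> : \sum_m sim ((sofR k (Tf (y w m 0)) *: W m) i j) = \sum_m sim (W m i j) * g m w.
    by apply: eq_bigr => m _; rewrite mxE simZ mulrC.
  rewrite im_core hKx sim_Emx; congr (_ + _); apply: eq_bigr => m _.
  rewrite mxE simZ hV sim_Emx; congr (_ * _); apply: E_ext => v.
  symmetry; rewrite mxE simZ; congr (_ * _).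
  have -> : (x v *m ctr (x v) - Kx) i j = X v i j - Kx i j by rewrite !mxE.
  by rewrite simB hKx sim_Emx.
Qed.
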